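(* Let $\mathcal M$ be a class of uniformly discrete metric spaces which is stable under inclusion. Let $f:\mathcal X\to \mathcal Y$ be a Lipschitz map such that for all $R$, the family \[\{f^{-1}(A)\mid A\subset Y\in \mathcal Y, \diam(A)\leq R \}\in \mathcal D_0(\mathcal M).\] Then $\overline{\operatorname{asdim}}_{\mathcal M}(\mathcal X)\leq \operatorname{asdim}(\mathcal Y).$
   Context: Metric families are collections of $1$-uniformly discrete bounded geometry metric spaces. A class $\mathcal M$ of metric families is stable under inclusion if $\mathcal X\subset\mathcal Y\in\mathcal M$ implies $\mathcal X\in\mathcal M$. $\mathcal D_0(\mathcal M)$ is the class of families $\mathcal X$ such that for every $r$, there is $\mathcal Z\in\mathcal M$ such that every $X\in\mathcal X$ is a disjoint union of sets in $\mathcal Z$ pairwise at distance at least $r$. $\operatorname{asdim}(\mathcal Y)$ is the least $d$ such that for every $r$, each $Y\in\mathcal Y$ is $Y_0\cup\dots\cup Y_d$ with each $Y_i$ a union of pieces pairwise at distance $\geq r$, all pieces of uniformly bounded diameter. $\overline{\operatorname{asdim}}_{\mathcal M}(\mathcal X)$ is the least $d$ such that for every $r$ each $X\in\mathcal X$ is $X_0\cup\dots\cup X_d$ with each $X_i$ a union of pieces pairwise at distance $\geq r$, such that, with $\mathcal Z$ the family of pieces, $N^m_s(\mathcal Z)\in\mathcal M$ for all $m,s\ge1$; here $N^0_s(Z)=Z$ and $N^{k+1}_s(Z)$ is the union of all $Z'\in\mathcal Z$ meeting the closed $s$-neighbourhood of $N^k_s(Z)$. *)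

(* Defs.v *)
From Stdlib Require Import Reals List.
Open Scope R_scope.

(* A metric space: a carrier type with a real-valued distance.  The metric
   axioms are imposed separately (predicate [is_metric]). *)
Record mspace : Type := MSpace { pt : Type ; dist : pt -> pt -> R }.

Definition mfamily := mspace -> Prop.
Definition mclass := mfamily -> Prop.

Definition is_metric (X : mspace) : Prop :=
  (forall x y, 0 <= dist X x y) /\
  (forall x y, dist X x y = 0 <-> x = y) /\
  (forall x y, dist X x y = dist X y x) /\
  (forall x y z, dist X x z <= dist X x y + dist X y z).

Definition unif_discrete1 (X : mspace) : Prop :=
  forall x y, x <> y -> 1 <= dist X x y.

Definition bounded_geometry (X : mspace) : Prop :=
  forall r, exists N : nat, forall x, exists l : list (pt X),
    (length l <= N)%nat /\ forall y, dist X x y <= r -> In y l.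

Definition metric_family (F : mfamily) : Prop :=
  forall X, F X -> is_metric X /\ unif_discrete1 X /\ bounded_geometry X.

Definition subspace (X : mspace) (A : pt X -> Prop) : mspace :=
  MSpace {x : pt X | A x} (fun a b => dist X (proj1_sig a) (proj1_sig b)).

Definition isom_embeds (X Y : mspace) : Prop :=
  exists e : pt X -> pt Y, forall x y, dist Y (e x) (e y) = dist X x y.

Definition subfamily (F G : mfamily) : Prop :=
  forall X, F X -> exists Y, G Y /\ isom_embeds X Y.

Definition stable_under_inclusion (M : mclass) : Prop :=
  forall F G : mfamily, subfamily F G -> M G -> M F.

Definition set_dist_ge (X : mspace) (U V : pt X -> Prop) (r : R) : Prop :=
  forall x y, U x -> V y -> r <= dist X x y.

Definition sep_partition (X : mspace) (r : R) (I : Type) (U : I -> pt X -> Prop) : Prop :=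
  (forall x, exists i, U i x) /\
  (forall i j, i <> j -> (forall x, U i x -> U j x -> False) /\ set_dist_ge X (U i) (U j) r).

Definition D0 (M : mclass) (F : mfamily) : Prop :=
  forall r : R, exists Z : mfamily, M Z /\
    forall X, F X -> exists (I : Type) (U : I -> pt X -> Prop),
      sep_partition X r I U /\ forall i, Z (subspace X (U i)).

Definition coloured_cover (X : mspace) (d : nat) (r : R)
  (I : nat -> Type) (U : forall k, I k -> pt X -> Prop) : Prop :=
  (forall x, exists k, (k <= d)%nat /\ exists j : I k, U k j x) /\
  (forall k (j j' : I k), (k <= d)%nat -> j <> j' -> set_dist_ge X (U k j) (U k j') r).

Definition asdim_le (F : mfamily) (d : nat) : Prop :=
  forall r : R, exists D : R, forall Y, F Y ->
    exists (I : nat -> Type) (U : forall k, I k -> pt Y -> Prop),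
      coloured_cover Y d r I U /\
      forall k (j : I k) x y, (k <= d)%nat -> U k j x -> U k j y -> dist Y x y <= D.

Fixpoint Nbhd (X : mspace) (d : nat) (I : nat -> Type) (U : forall k, I k -> pt X -> Prop)
  (s : R) (Z : pt X -> Prop) (m : nat) : pt X -> Prop :=
  match m with
  | O => Z
  | S m' => fun x => exists k (j : I k), (k <= d)%nat /\ U k j x /\
              exists y, U k j y /\ exists z, Nbhd X d I U s Z m' z /\ dist X z y <= s
  end.

Definition Nfam (F : mfamily) (d : nat) (I : mspace -> nat -> Type)
  (U : forall X k, I X k -> pt X -> Prop) (m : nat) (s : R) : mfamily :=
  fun N => exists X, F X /\ exists k (j : I X k), (k <= d)%nat /\
             N = subspace X (Nbhd X d (I X) (U X) s (U X k j) m).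

Definition asdimM_le (M : mclass) (F : mfamily) (d : nat) : Prop :=
  forall r : R, exists (I : mspace -> nat -> Type) (U : forall X k, I X k -> pt X -> Prop),
    (forall X, F X -> coloured_cover X d r (I X) (U X)) /\
    forall (m : nat) (s : R), (1 <= m)%nat -> 1 <= s -> M (Nfam F d I U m s).

(* a map f : FX -> FY : each X in FX is sent to fY X in FY by f X *)
Definition lipschitz (FX : mfamily) (fY : mspace -> mspace) (f : forall X, pt X -> pt (fY X)) : Prop :=
  exists L : R, forall X, FX X -> forall x y,
    dist (fY X) (f X x) (f X y) <= L * dist X x y.

Definition preimage_family (FX : mfamily) (fY : mspace -> mspace)
  (f : forall X, pt X -> pt (fY X)) (Rd : R) : mfamily :=
  fun N => exists X, FX X /\ exists A : pt (fY X) -> Prop,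
    (forall a b, A a -> A b -> dist (fY X) a b <= Rd) /\
    N = subspace X (fun x => A (f X x)).

(* Main.v *)
Require Import Defs.
From Stdlib Require Import Reals Relations Classical FunctionalExtensionality PropExtensionality ProofIrrelevance ClassicalEpsilon Lra Lia.
Open Scope R_scope.
Notation dist := Defs.dist.

Definition Ed (X : mspace) (S : pt X -> Prop) (r : R) (x y : pt X) : Prop :=
  S x /\ S y /\ dist X x y <= r.
Definition ccomp (X : mspace) (S : pt X -> Prop) (r : R) (x0 y : pt X) : Prop :=
  S x0 /\ clos_refl_sym_trans _ (Ed X S r) x0 y.

Lemma rst_S X S r x y : clos_refl_sym_trans _ (Ed X S r) x y -> (S x <-> S y).
Proof.
  induction 1 as [x y [H1 [H2 _]]| x | x y _ IH | x y z _ IH1 _ IH2]; tauto.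
Qed.

Lemma comp_S X S r x0 y : ccomp X S r x0 y -> S y.
Proof. intros [H1 H2]. apply (rst_S _ _ _ _ _ H2); auto. Qed.

Lemma comp_self X S r x0 : S x0 -> ccomp X S r x0 x0.
Proof. split; auto. apply rst_refl. Qed.

Lemma comp_eq X S r x0 x1 a b : ccomp X S r x0 a -> ccomp X S r x1 b -> dist X a b <= r ->
  ccomp X S r x0 = ccomp X S r x1.
Proof.
  intros Ha Hb Hd.
  assert (Hsa := comp_S _ _ _ _ _ Ha). assert (Hsb := comp_S _ _ _ _ _ Hb).
  destruct Ha as [S0 Ha]; destruct Hb as [S1 Hb].
  assert (H01 : clos_refl_sym_trans _ (Ed X S r) x0 x1).
  { apply rst_trans with a; auto. apply rst_trans with b.
    - apply rst_step; repeat split; auto.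
    - apply rst_sym; auto. }
  apply functional_extensionality; intro y; apply propositional_extensionality.
  unfold ccomp; split; intros [_ H]; split; auto.
  - apply rst_trans with x0; auto. apply rst_sym; auto.
  - apply rst_trans with x1; auto.
Qed.

Lemma comp_rst X S r x0 y z : ccomp X S r x0 y -> ccomp X S r x0 z -> clos_refl_sym_trans _ (Ed X S r) y z.
Proof. intros [_ H1] [_ H2]. apply rst_trans with x0; auto. apply rst_sym; auto. Qed.

Lemma Nbhd_piece X d I U s Z m x :
  Nbhd X d I U s Z (S m) x -> exists k (j : I k), (k <= d)%nat /\ U k j x.
Proof. simpl. intros [k [j [Hk [Hx _]]]]. eauto. Qed.

Lemma Nbhd_succ X d I U s Z m x :
  is_metric X -> 0 <= s ->
  (forall x, Z x -> exists k (j : I k), (k <= d)%nat /\ U k j x) ->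
  Nbhd X d I U s Z m x -> Nbhd X d I U s Z (S m) x.
Proof.
  intros HX Hs HZ H.
  assert (Hp : exists k (j : I k), (k <= d)%nat /\ U k j x).
  { destruct m. apply HZ; exact H. exact (Nbhd_piece _ _ _ _ _ _ _ _ H). }
  destruct Hp as [k [j [Hk Hx]]].
  simpl. exists k, j. split; [exact Hk|]. split; [exact Hx|].
  exists x. split; [exact Hx|]. exists x. split; [exact H|].
  destruct HX as [_ [H0 _]]. rewrite (proj2 (H0 x x) eq_refl). exact Hs.
Qed.

Lemma Nbhd_le X d I U s Z k m x :
  is_metric X -> 0 <= s ->
  (forall x, Z x -> exists k (j : I k), (k <= d)%nat /\ U k j x) ->
  (k <= m)%nat -> Nbhd X d I U s Z k x -> Nbhd X d I U s Z m x.
Proof.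
  intros HX Hs HZ Hkm. induction Hkm; auto.
  intro H. apply Nbhd_succ; auto.
Qed.

Lemma Nbhd_bound X Y (g : pt X -> pt Y) d I U s Z D L :
  is_metric Y -> 0 < L ->
  (forall x y, dist Y (g x) (g y) <= L * dist X x y) ->
  (forall x y, Z x -> Z y -> dist Y (g x) (g y) <= D) ->
  (forall k (j : I k) x y, (k <= d)%nat -> U k j x -> U k j y -> dist Y (g x) (g y) <= D) ->
  forall m x, Nbhd X d I U s Z m x -> forall x0, Z x0 ->
    dist Y (g x) (g x0) <= D + INR m * (D + L * s).
Proof.
  intros HY HL Hg HZ HU m. induction m as [|m IH]; intros x Hx x0 Hx0.
  - simpl in *. rewrite Rmult_0_l, Rplus_0_r. auto.
  - simpl in Hx. destruct Hx as [k [j [Hk [Hx [y [Hy [z [Hz Hzy]]]]]]]].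
    destruct HY as [_ [_ [Hsym Htri]]].
    assert (H1 := HU k j x y Hk Hx Hy).
    assert (H2 : dist Y (g y) (g z) <= L * s).
    { rewrite Hsym. eapply Rle_trans; [apply Hg|]. apply Rmult_le_compat_l; lra. }
    assert (H3 := IH z Hz x0 Hx0).
    rewrite S_INR.
    eapply Rle_trans; [apply (Htri _ (g y))|].
    eapply Rle_trans; [apply Rplus_le_compat_l; apply (Htri _ (g z))|].
    lra.
Qed.

Definition Qp (X : mspace) (W : pt X -> Prop) (I' : Type) (U' : I' -> pt (subspace X W) -> Prop)
  (i : I') (x : pt X) : Prop :=
  forall u : pt (subspace X W), proj1_sig u = x -> U' i u.

Lemma Qp_lift X W I' U' i x (h : W x) : U' i (exist _ x h) -> Qp X W I' U' i x.
Proof.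
  intros H [y p] e. simpl in e. subst y. rewrite (proof_irrelevance _ p h). exact H.
Qed.

Lemma key X W I' U' i t t' x y :
  is_metric X -> sep_partition (subspace X W) t' I' U' -> t < t' ->
  W x -> W y -> dist X x y <= t -> Qp X W I' U' i x -> Qp X W I' U' i y.
Proof.
  intros HX [Hcov Hsep] Ht Wx Wy Hd Hq.
  apply Qp_lift with Wy.
  destruct (Hcov (exist _ y Wy)) as [i' Hi'].
  destruct (classic (i = i')) as [<-|Hne]; auto.
  exfalso. destruct (Hsep i i' Hne) as [_ Hs].
  specialize (Hs (exist _ x Wx) (exist _ y Wy) (Hq (exist _ x Wx) eq_refl) Hi'). simpl in Hs. lra.
Qed.

Lemma chainQ X W I' U' i t t' Sx r x1 :
  is_metric X -> sep_partition (subspace X W) t' I' U' -> t < t' -> r <= t ->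
  (forall w, ccomp X Sx r x1 w -> W w) ->
  forall w, ccomp X Sx r x1 w -> (Qp X W I' U' i x1 <-> Qp X W I' U' i w).
Proof.
  intros HX Hp Ht Hr HW.
  assert (G : forall y z, clos_refl_sym_trans _ (Ed X Sx r) y z ->
            clos_refl_sym_trans _ (Ed X Sx r) x1 y ->
            (Qp X W I' U' i y <-> Qp X W I' U' i z)).
  { induction 1 as [y z Hyz| y | y z Hzy IH | x y z H1 IH1 H2 IH2]; intro Hy.
    - assert (Hz : clos_refl_sym_trans _ (Ed X Sx r) x1 z).
      { apply rst_trans with y; auto. apply rst_step; auto. }
      assert (Sx1 : Sx x1).
      { destruct Hyz as [Sy _]. apply (rst_S _ _ _ _ _ Hy); auto. }
      assert (Wy : W y) by (apply HW; split; auto).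
      assert (Wz : W z) by (apply HW; split; auto).
      destruct Hyz as [_ [_ Hd]].
      assert (Hsym := proj1 (proj2 (proj2 HX)) y z).
      split; intro Hq.
      + apply (key X W I' U' i t t' y z); auto. lra.
      + apply (key X W I' U' i t t' z y); auto; lra.
    - tauto.
    - assert (Hz : clos_refl_sym_trans _ (Ed X Sx r) x1 y) by (apply rst_trans with z; auto; apply rst_sym; auto).
      specialize (IH Hz). tauto.
    - specialize (IH1 Hy).
      assert (Hy' : clos_refl_sym_trans _ (Ed X Sx r) x1 y) by (apply rst_trans with x; auto).
      specialize (IH2 Hy'). tauto. }
  intros w [Sx1 Hw]. apply G; auto. apply rst_refl.
Qed.

Section Main.
Variables (M : mclass) (FX FY : mfamily) (fY : mspace -> mspace) (f : forall X, pt X -> pt (fY X)).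
Variables (d : nat) (r L D : R) (IY : mspace -> nat -> Type)
  (UY : forall X k, IY X k -> pt (fY X) -> Prop).
Hypotheses (HFX : metric_family FX) (HFY : metric_family FY) (HM : stable_under_inclusion M)
  (Hmap : forall X, FX X -> FY (fY X)) (HL : 0 < L)
  (Hlip : forall X, FX X -> forall x y, dist (fY X) (f X x) (f X y) <= L * dist X x y)
  (HD0 : forall Rd : R, D0 M (preimage_family FX fY f Rd))
  (Hcov : forall X, FX X -> coloured_cover (fY X) d (L * r) (IY X) (UY X) /\
     forall k j a b, (k <= d)%nat -> UY X k j a -> UY X k j b -> dist (fY X) a b <= D).

Definition Sj X k (j : IY X k) : pt X -> Prop := fun x => UY X k j (f X x).
Definition Ip X k := {P : pt X -> Prop | exists (j : IY X k) x0, Sj X k j x0 /\ P = ccomp X (Sj X k j) r x0}.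
Definition Up X k (P : Ip X k) : pt X -> Prop := proj1_sig P.

Lemma cover_part X : FX X -> coloured_cover X d r (Ip X) (Up X).
Proof.
  intro HX. destruct (Hcov X HX) as [[Hc Hs] _]. split.
  - intro x. destruct (Hc (f X x)) as [k [Hk [j Hj]]]. exists k; split; auto.
    exists (exist _ (ccomp X (Sj X k j) r x) (ex_intro _ j (ex_intro _ x (conj Hj eq_refl)))).
    apply comp_self. exact Hj.
  - intros k [P [j [x0 [H0 ->]]]] [P' [j' [x1 [H1 ->]]]] Hk Hne a b Ha Hb. simpl in Ha, Hb.
    destruct (Rlt_le_dec (dist X a b) r) as [Hlt|]; auto. exfalso.
    destruct (classic (j = j')) as [<-|Hjj].
    + apply Hne. apply subset_eq_compat. eapply comp_eq; eauto. lra.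
    + assert (Ha' := comp_S _ _ _ _ _ Ha). assert (Hb' := comp_S _ _ _ _ _ Hb).
      specialize (Hs k j j' Hk Hjj (f X a) (f X b) Ha' Hb').
      assert (Hl := Hlip X HX a b).
      assert (L * dist X a b < L * r) by (apply Rmult_lt_compat_l; auto). lra.
Qed.

Lemma M_part m s : (1 <= m)%nat -> 1 <= s -> M (Nfam FX d Ip Up m s).
Proof.
  intros Hm Hs.
  set (t := Rmax r s).
  set (rho := D + INR m * (D + L * s)).
  destruct (HD0 (2 * rho) (t + 1)) as [Z [HZ HZp]].
  apply HM with Z; auto.
  intros N [X [HX [k0 [P0s [Hk0 ->]]]]].
  set (Nb := Nbhd X d (Ip X) (Up X) s (Up X k0 P0s)).
  assert (HXm := proj1 (HFX X HX)). assert (HYm := proj1 (HFY _ (Hmap X HX))).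
  assert (HZpc : forall x, Up X k0 P0s x -> exists k (j : Ip X k), (k <= d)%nat /\ Up X k j x).
  { intros x Hx. exists k0, P0s. auto. }
  assert (Hle : forall k x, (k <= m)%nat -> Nb k x -> Nb m x).
  { intros k x Hk. apply Nbhd_le; auto. lra. }
  set (A := fun a => exists x, Nb m x /\ a = f X x).
  set (W := fun x => A (f X x)).
  assert (WNb : forall x, Nb m x -> W x).
  { intros x Hx. exists x; auto. }
  destruct P0s as [P0 [j0 [x0 [Hx0 HP0]]]] eqn:EP0.
  assert (Hx0P : P0 x0) by (rewrite HP0; apply comp_self; auto).
  assert (Hpb : forall k (j : Ip X k) x y, (k <= d)%nat -> Up X k j x -> Up X k j y ->
             dist (fY X) (f X x) (f X y) <= D).
  { intros k [P [j [x1 [Hs1 HP]]]] x y Hk Hx Hy. simpl in Hx, Hy. rewrite HP in Hx, Hy.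
    apply (proj2 (Hcov X HX) k j); auto.
    - exact (comp_S _ _ _ _ _ Hx).
    - exact (comp_S _ _ _ _ _ Hy). }
  assert (Hbd : forall x, Nb m x -> dist (fY X) (f X x) (f X x0) <= rho).
  { intros x Hx. unfold rho. eapply (Nbhd_bound X (fY X) (f X) d (Ip X) (Up X) s); eauto. }
  assert (Hdiam : forall a b, A a -> A b -> dist (fY X) a b <= 2 * rho).
  { intros a b [x [Hx ->]] [y [Hy ->]].
    destruct HYm as [_ [_ [Hsym Htri]]].
    eapply Rle_trans; [apply (Htri _ (f X x0))|]. rewrite (Hsym (f X x0)).
    assert (H1 := Hbd x Hx). assert (H2 := Hbd y Hy). lra. }
  assert (Hpre : preimage_family FX fY f (2 * rho) (subspace X W)).
  { exists X; split; auto. exists A; split; auto. }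
  destruct (HZp _ Hpre) as [I' [U' [Hpart HZi]]].
  assert (Wx0 : W x0).
  { apply WNb. apply Hle with O. lia. unfold Nb; simpl. exact Hx0P. }
  destruct (proj1 Hpart (exist _ x0 Wx0)) as [i Hi].
  assert (Ht : t < t + 1) by lra.
  assert (Hrt : r <= t) by apply Rmax_l.
  assert (Hst : s <= t) by apply Rmax_r.
  assert (Claim : forall k, (k <= m)%nat -> forall x, Nb k x -> Qp X W I' U' i x).
  { induction k as [|k IH]; intros Hk x Hx.
    - unfold Nb in Hx; simpl in Hx. rewrite HP0 in Hx.
      assert (Q0 := Qp_lift _ _ _ _ _ _ _ Hi).
      apply (proj1 (chainQ X W I' U' i t (t+1) (Sj X k0 j0) r x0 HXm Hpart Ht Hrt
               (fun w Hw => WNb w (Hle O w (Nat.le_0_l m) ltac:(unfold Nb; simpl; rewrite HP0; exact Hw))) x Hx)).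
      exact Q0.
    - assert (HxN := Hx). unfold Nb in Hx; simpl in Hx.
      destruct Hx as [k1 [P1 [Hk1 [HxP [y [Hy [z [Hz Hzy]]]]]]]].
      assert (Qz := IH ltac:(lia) z Hz).
      assert (HinN : forall w, Up X k1 P1 w -> Nb (S k) w).
      { intros w Hw. unfold Nb; simpl. exists k1, P1. split; auto. split; auto.
        exists y; split; auto. exists z; split; auto. }
      assert (Qy : Qp X W I' U' i y).
      { apply (key X W I' U' i t (t+1) z y); auto.
        - apply WNb; apply Hle with k; auto; lia.
        - apply WNb; apply Hle with (S k); auto.
        - lra. }
      destruct P1 as [P1 [j1 [x1 [Hx1 HP1]]]].
      assert (HW1 : forall w, ccomp X (Sj X k1 j1) r x1 w -> W w).
      { intros w Hw. apply WNb. apply Hle with (S k); auto. apply HinN. simpl. rewrite HP1. exact Hw. }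
      simpl in HxP, Hy. rewrite HP1 in HxP, Hy.
      assert (C := chainQ X W I' U' i t (t+1) (Sj X k1 j1) r x1 HXm Hpart Ht Hrt HW1).
      apply (proj1 (C x HxP)). apply (proj2 (C y Hy)). exact Qy. }
  exists (subspace (subspace X W) (U' i)). split; [apply HZi|].
  exists (fun u : pt (subspace X (Nb m)) =>
     exist (U' i) (exist W (proj1_sig u) (WNb _ (proj2_sig u)))
       (Claim m (le_n m) _ (proj2_sig u) (exist W (proj1_sig u) (WNb _ (proj2_sig u))) eq_refl)).
  intros; reflexivity.
Qed.
End Main.

Theorem proposition2p6 (M : mclass) (FX FY : mfamily) (fY : mspace -> mspace)
  (f : forall X, pt X -> pt (fY X)) :
  metric_family FX -> metric_family FY ->
  stable_under_inclusion M ->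
  (forall X, FX X -> FY (fY X)) ->
  lipschitz FX fY f ->
  (forall Rd : R, D0 M (preimage_family FX fY f Rd)) ->
  forall d : nat, asdim_le FY d -> asdimM_le M FX d.
Proof.
  intros HFX HFY HM Hmap [L0 HL0] HD0 d Had r.
  set (L := Rabs L0 + 1).
  assert (HL : 0 < L) by (unfold L; pose proof (Rabs_pos L0); lra).
  assert (Hlip : forall X, FX X -> forall x y, dist (fY X) (f X x) (f X y) <= L * dist X x y).
  { intros X HX x y. eapply Rle_trans; [apply HL0; auto|].
    assert (0 <= dist X x y) by apply (proj1 (proj1 (HFX X HX))).
    apply Rmult_le_compat_r; auto. unfold L. pose proof (Rle_abs L0). lra. }
  destruct (Had (L * r)) as [D HD].
  assert (ch : forall Y : mspace, {c : {I : nat -> Type & forall k, I k -> pt Y -> Prop} |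
     FY Y -> coloured_cover Y d (L * r) (projT1 c) (projT2 c) /\
       forall k j a b, (k <= d)%nat -> projT2 c k j a -> projT2 c k j b -> dist Y a b <= D}).
  { intro Y. apply constructive_indefinite_description.
    destruct (classic (FY Y)) as [HY|HY].
    - destruct (HD Y HY) as [IY [UY [H1 H2]]]. exists (existT _ IY UY). intros _; split; auto.
    - exists (existT (fun I : nat -> Type => forall k, I k -> pt Y -> Prop) (fun _ => Empty_set) (fun k j y => False)).
      intro; contradiction. }
  exists (Ip fY f r (fun X => projT1 (proj1_sig (ch (fY X)))) (fun X => projT2 (proj1_sig (ch (fY X))))).
  exists (Up fY f r (fun X => projT1 (proj1_sig (ch (fY X)))) (fun X => projT2 (proj1_sig (ch (fY X))))).
  assert (Hcov : forall X, FX X -> coloured_cover (fY X) d (L * r) (projT1 (proj1_sig (ch (fY X)))) (projT2 (proj1_sig (ch (fY X)))) /\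
     forall k j a b, (k <= d)%nat -> projT2 (proj1_sig (ch (fY X))) k j a -> projT2 (proj1_sig (ch (fY X))) k j b -> dist (fY X) a b <= D).
  { intros X HX. exact (proj2_sig (ch (fY X)) (Hmap X HX)). }
  split.
  - intros X HX. apply (cover_part FX fY f d r L D); auto.
  - intros m s Hm Hs. apply (M_part M FX FY fY f d r L D); auto.
Qed.
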